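(* Let $i\ge0$, let $\mathbf{e}_i$ be a 1-dimensional error pattern at level $i$, let $P_i$ be its number of paths, and let $\mathbf{e}_{i+1}$ be a 1-dimensional preimage of $\mathbf{e}_i$. Then $\mathrm{wt}(\mathbf{e}_{i+1})\ge\mathrm{wt}(\mathbf{e}_i)+P_i$.
   Context: 1-dimensional model. For $j\ge0$, the line at level $j$ is the cycle with vertex set $\mathbb{Z}/2^j\mathbb{Z}$ and edges $\{v,v+1\}$, $v\in\mathbb{Z}/2^j\mathbb{Z}$ (for $j=0$, one vertex with a loop edge). A 1-dimensional error pattern at level $j$ is a subset of these edges; $\mathrm{wt}$ is its number of edges; its syndrome is the set of vertices incident to an odd number of its edges. The number of paths of a pattern is the number of connected components (maximal runs of consecutive edges) of the pattern, except that it is $0$ when the pattern is the whole cycle. At level $j+1$, block $m\in\mathbb{Z}/2^j\mathbb{Z}$ consists of the left edge $\{2m,2m+1\}$ and right edge $\{2m+1,2m+2\}$ and corresponds to the edge $\{m,m+1\}$ at level $j$. One reduction stage applied to a pattern $\mathbf{f}$ at level $j+1$ with syndrome $S$: (a) for every block, if $2m+1,2m+2\in S$, flip (add mod 2) the right edge and remove both from $S$; (b) then for every block, if $2m+1$ is still in $S$, flip the left edge. In the resulting pattern $\mathbf{f}'$ each block contains $0$ or $2$ edges; the image of $\mathbf{f}$ is the pattern at level $j$ containing $\{m,m+1\}$ iff block $m\subseteq\mathbf{f}'$. A pattern $\mathbf{f}$ at level $j+1$ is a 1-dimensional preimage of $\mathbf{g}$ at level $j$ if the image of $\mathbf{f}$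 is $\mathbf{g}$. *)

(* Defs.v *)
From mathcomp Require Import all_boot.
Set Implicit Arguments. Unset Strict Implicit. Unset Printing Implicit Defensive.

(* Level j: the cycle Z/2^j Z.  Vertices and edges are both indexed by 'I_(2^j);
   edge v is the edge {v, v+1}. A pattern is a set of edges. *)

Lemma pow2_gt0 (j : nat) : 0 < 2 ^ j.
Proof. by rewrite expn_gt0. Qed.

Definition mk (j k : nat) : 'I_(2 ^ j) := Ordinal (ltn_pmod k (pow2_gt0 j)).

Definition pattern (j : nat) := {set 'I_(2 ^ j)}.

Definition wt (j : nat) (f : pattern j) : nat := #|f|.

Definition incident (j : nat) (e u : 'I_(2 ^ j)) : bool :=
  (u == e) || (u == mk j (e + 1)).

Definition syndrome (j : nat) (f : pattern j) : {set 'I_(2 ^ j)} :=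
  [set u | odd #|[set e in f | incident e u]|].

(* number of paths: number of maximal runs of consecutive edges, i.e. number of
   edges v in g whose predecessor edge v-1 is not in g; 0 for the whole cycle *)
Definition npaths (j : nat) (g : pattern j) : nat :=
  if g == setT then 0
  else #|[set v in g | mk j (v + 2 ^ j - 1) \notin g]|.

(* Block m at level j+1: left edge {2m,2m+1}, right edge {2m+1,2m+2}. *)
Definition ledge (j : nat) (m : 'I_(2 ^ j)) : 'I_(2 ^ j.+1) := mk j.+1 (2 * m).
Definition redge (j : nat) (m : 'I_(2 ^ j)) : 'I_(2 ^ j.+1) := mk j.+1 (2 * m + 1).
Definition vodd (j : nat) (m : 'I_(2 ^ j)) : 'I_(2 ^ j.+1) := mk j.+1 (2 * m + 1).
Definition veven (j : nat) (m : 'I_(2 ^ j)) : 'I_(2 ^ j.+1) := mk j.+1 (2 * m + 2).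

Definition symdiff (T : finType) (A B : {set T}) : {set T} := (A :\: B) :|: (B :\: A).

Definition cond_a (j : nat) (f : pattern j.+1) (m : 'I_(2 ^ j)) : bool :=
  (vodd m \in syndrome f) && (veven m \in syndrome f).

Definition flips_a (j : nat) (f : pattern j.+1) : {set 'I_(2 ^ j.+1)} :=
  [set redge m | m in [set m | cond_a f m]].
Definition syndrome_a (j : nat) (f : pattern j.+1) : {set 'I_(2 ^ j.+1)} :=
  syndrome f :\: [set u | [exists m, cond_a f m && ((u == vodd m) || (u == veven m))]].
Definition flips_b (j : nat) (f : pattern j.+1) : {set 'I_(2 ^ j.+1)} :=
  [set ledge m | m in [set m : 'I_(2 ^ j) | vodd m \in syndrome_a f]].

Definition reduced (j : nat) (f : pattern j.+1) : pattern j.+1 :=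
  symdiff (symdiff f (flips_a f)) (flips_b f).

Definition image1 (j : nat) (f : pattern j.+1) : pattern j :=
  [set m | (ledge m \in reduced f) && (redge m \in reduced f)].

Definition is_preimage (j : nat) (f : pattern j.+1) (g : pattern j) : Prop :=
  image1 f = g.

(* Main.v *)
Require Import Defs.
From mathcomp Require Import all_boot zify.

Lemma mk_ordS j (e : 'I_(2^j)) : mk j (e + 1) = ordS e.
Proof. apply/val_inj => /=. by rewrite addn1. Qed.

Lemma mk_pred j (e : 'I_(2^j)) : mk j (e + 2^j - 1) = ord_pred e.
Proof. apply/val_inj => /=. have := pow2_gt0 j. by rewrite -subn1 => _. Qed.

Lemma symdiffE (T : finType) (A B : {set T}) x :
  (x \in symdiff A B) = (x \in A) (+) (x \in B).
Proof. by rewrite /symdiff !inE; case: (x \in A); case: (x \in B). Qed.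

Lemma card_two (T : finType) (A : {set T}) u p : u != p ->
  #|[set e in A | (e == u) || (e == p)]| = (u \in A) + (p \in A).
Proof.
move=> up.
have E : [set e in A | (e == u) || (e == p)] =
   ([set e in A | e == u] :|: [set e in A | e == p]).
  by apply/setP => e; rewrite !inE andb_orr.
rewrite E cardsU.
have -> : [set e in A | e == u] :&: [set e in A | e == p] = set0.
  apply/setP => e; rewrite !inE; case: (e =P u) => [->|]; last by rewrite !andbF.
  by rewrite (negbTE up) !andbF.
have C : forall v, #|[set e in A | e == v]| = (v \in A).
  move=> v; case vA: (v \in A).
    have -> : [set e in A | e == v] = [set v]. 
      by apply/setP => e; rewrite !inE; case: (e =P v) => [->|]; rewrite ?vA ?andbF.
    by rewrite cards1.
  have -> : [set e in A | e == v] = set0.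
      by apply/setP => e; rewrite !inE; case: (e =P v) => [->|]; rewrite ?vA ?andbF.
  by rewrite cards0.
by rewrite !C cards0 subn0.
Qed.

Lemma syndromeE i (f : pattern i.+1) u :
  (u \in syndrome f) = (u \in f) (+) (ord_pred u \in f).
Proof.
rewrite /syndrome inE.
have -> : [set e in f | incident e u] = [set e in f | (e == u) || (e == ord_pred u)].
  apply/setP => e; rewrite !inE /incident mk_ordS eq_sym; congr (_ && (_ || _)).
  apply/eqP/eqP => [->|->]; [by rewrite ordSK | by rewrite ord_predK].
rewrite card_two.
  by rewrite oddD; case: (u \in f); case: (ord_pred u \in f).
apply/eqP => /(congr1 val) /=.
move: (nat_of_ord u) (ltn_ord u) => x; rewrite expnS => H.
have H2 := pow2_gt0 i.
lia.
Qed.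

Section S.
Variable i : nat.
Implicit Types m : 'I_(2^i).

Lemma ledgeV m : val (ledge m) = 2 * m.
Proof. rewrite /= modn_small // expnS ltn_mul2l /=. exact: ltn_ord. Qed.
Lemma redgeV m : val (redge m) = (2 * m).+1.
Proof. rewrite /= modn_small ?addn1 //. have := ltn_ord m. rewrite expnS. lia. Qed.

Lemma ledge_inj : injective (@ledge i).
Proof. move=> m m' /(congr1 val); rewrite !ledgeV => H; apply/val_inj => /=; lia. Qed.
Lemma redge_inj : injective (@redge i).
Proof. move=> m m' /(congr1 val); rewrite !redgeV => H; apply/val_inj => /=; lia. Qed.
Lemma ledge_redge m m' : ledge m != redge m'.
Proof. apply/eqP => /(congr1 val); rewrite ledgeV redgeV; lia. Qed.

Lemma pred_vodd m : ord_pred (vodd m) = ledge m.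
Proof.
apply/val_inj; rewrite ledgeV /=. have := ltn_ord m. 
move: (nat_of_ord m) => x. rewrite expnS => H. 
rewrite (@modn_small (2*x+1)); last lia.
have ->: (2 * x + 1 + 2 * 2 ^ i).-1 = 2 * x + 2 * 2^i by lia.
rewrite -modnDmr modnn addn0 modn_small; lia.
Qed.

Lemma veven_ledge m : veven m = ledge (ordS m).
Proof.
apply/val_inj; rewrite ledgeV /=. have := ltn_ord m.
move: (nat_of_ord m) => x. rewrite expnS => H.
have H2 := pow2_gt0 i.
case: (ltngtP x.+1 (2^i)) => Hx; [|lia|].
  rewrite !modn_small; lia.
rewrite Hx modnn -Hx. have ->: 2 * x + 2 = 2 * x.+1 by lia. rewrite Hx modnn //.
Qed.

Lemma pred_veven m : ord_pred (veven m) = redge m.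
Proof.
have -> : veven m = ordS (redge m).
  apply/val_inj => /=. have := redgeV m. rewrite /= => ->. by rewrite addn2 -addn1 addn1.
by rewrite ordSK.
Qed.

Variable f : pattern i.+1.

Lemma syn_vodd m : (vodd m \in syndrome f) = (redge m \in f) (+) (ledge m \in f).
Proof. by rewrite syndromeE pred_vodd. Qed.
Lemma syn_veven m : (veven m \in syndrome f) = (ledge (ordS m) \in f) (+) (redge m \in f).
Proof. by rewrite syndromeE pred_veven veven_ledge. Qed.

Lemma syna_vodd m : (vodd m \in syndrome_a f) = (vodd m \in syndrome f) && ~~ cond_a f m.
Proof.
rewrite /syndrome_a !inE andbC; congr (_ && _); congr (~~ _).
apply/existsP/idP => [[m' /andP [c /orP [/eqP E|/eqP E]]]|c].
- by move: E => /redge_inj ->.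
- by move: E; rewrite veven_ledge => /eqP; rewrite eq_sym (negbTE (ledge_redge _ _)).
- by exists m; rewrite c eqxx.
Qed.

Lemma red_ledge m : (ledge m \in reduced f) = (ledge m \in f) (+) (vodd m \in syndrome_a f).
Proof.
rewrite /reduced !symdiffE.
have -> : (ledge m \in flips_a f) = false.
  apply/imsetP => [[m' _ /eqP]]; by rewrite (negbTE (ledge_redge _ _)).
rewrite /flips_b mem_imset; last exact: ledge_inj.
by rewrite inE addbF.
Qed.

Lemma red_redge m : (redge m \in reduced f) = (redge m \in f) (+) cond_a f m.
Proof.
rewrite /reduced !symdiffE.
have -> : (redge m \in flips_b f) = false.
  apply/imsetP => [[m' _ /eqP]]; by rewrite eq_sym (negbTE (ledge_redge _ _)).
rewrite /flips_a mem_imset; last exact: redge_inj.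
by rewrite inE addbF.
Qed.
End S.

Lemma card_sumb (T : finType) (P : pred T) : #|[set x | P x]| = \sum_x (P x : nat).
Proof.
rewrite -sum1_card big_mkcond /=; apply: eq_bigr => x _; rewrite inE; by case: (P x).
Qed.

Lemma block_cover i (x : 'I_(2^i.+1)) : exists m : 'I_(2^i), x = ledge m \/ x = redge m.
Proof.
have H : x %/ 2 < 2^i. move: (nat_of_ord x) (ltn_ord x) => y; rewrite expnS; lia.
exists (Ordinal H).
case: (boolP (odd x)) => o; [right|left]; apply/val_inj;
  rewrite ?ledgeV ?redgeV /=; move: o; rewrite -[odd _]/(odd (nat_of_ord x)) => o.
  have := divn_eq x 2. rewrite modn2 o. lia.
have := divn_eq x 2. rewrite modn2 (negbTE o). lia.
Qed.

Lemma wt_blocks i (f : pattern i.+1) :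
  wt f = \sum_(m : 'I_(2^i)) ((ledge m \in f) + (redge m \in f)).
Proof.
rewrite big_split /= -!card_sumb /wt -(cardsID (@ledge i @: setT) f).
congr (_ + _).
  have -> : f :&: @ledge i @: setT = @ledge i @: [set m | ledge m \in f].
    apply/setP => x; rewrite !inE. apply/andP/imsetP => [[xf]|[m]].
      case/imsetP => m _ E; subst x.
      by exists m; rewrite ?inE.
    by rewrite inE => mf ->; split => //; apply: imset_f.
  by rewrite card_imset //; exact: ledge_inj.
have -> : f :\: @ledge i @: setT = @redge i @: [set m | redge m \in f].
  apply/setP => x; rewrite !inE. apply/idP/idP => [/andP [xL xf]|/imsetP [m]].
    have [m [E|E]] := @block_cover i x.
      by move: xL; rewrite E imset_f.
    by apply/imsetP; exists m; rewrite ?inE -?E.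
  rewrite inE => mf ->; rewrite mf andbT. apply/imsetP => [[m' _ /eqP]].
  by rewrite eq_sym (negbTE (ledge_redge _ _ _)).
by rewrite card_imset //; exact: redge_inj.
Qed.

Section B.
Variable i : nat.
Variable f : pattern i.+1.
Implicit Types m : 'I_(2^i).

Lemma gE m : (m \in image1 f) =
  ((ledge m \in f) (+) (((redge m \in f) (+) (ledge m \in f)) && ~~ cond_a f m)) &&
  ((redge m \in f) (+) cond_a f m).
Proof. by rewrite inE red_ledge red_redge syna_vodd syn_vodd. Qed.

Lemma F1 m : m \in image1 f -> (ledge m \in f) || (redge m \in f).
Proof.
rewrite gE /cond_a syn_vodd syn_veven.
by case: (ledge m \in f); case: (redge m \in f); case: (ledge (ordS m) \in f).
Qed.

Lemma F2 m : m \in image1 f -> ledge (ordS m) \notin f -> (ledge m \in f) && (redge m \in f).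
Proof.
rewrite gE /cond_a syn_vodd syn_veven.
by case: (ledge m \in f); case: (redge m \in f); case: (ledge (ordS m) \in f).
Qed.
End B.

Lemma shift_eq n (g : {set 'I_n}) :
  \sum_m ((m \in g) && (ord_pred m \notin g) : nat) =
  \sum_m ((m \in g) && (ordS m \notin g) : nat).
Proof.
rewrite (reindex_inj (@ordS_inj n)) /=.
under eq_bigr do rewrite ordSK.
apply/eqP; rewrite -(eqn_add2r (\sum_m ((m \in g) && (ordS m \in g) : nat))).
rewrite -!big_split /=.
rewrite (eq_bigr (fun m => (ordS m \in g) : nat)); last first.
  by move=> m _; case: (m \in g); case: (ordS m \in g).
rewrite [X in _ == X](eq_bigr (fun m => (m \in g) : nat)); last first.
  by move=> m _; case: (m \in g); case: (ordS m \in g).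
by rewrite [X in _ == X](reindex_inj (@ordS_inj n)).
Qed.

Theorem lemma1 (i : nat) (ei : pattern i) (ei1 : pattern i.+1) :
  is_preimage ei1 ei -> wt ei + npaths ei <= wt ei1.
Proof.
rewrite /is_preimage => <-.
set g := image1 ei1.
set l := fun m : 'I_(2^i) => ledge m \in ei1.
set r := fun m : 'I_(2^i) => redge m \in ei1.
have Hw : wt ei1 = \sum_m (l m + r m) by exact: wt_blocks.
have Hg : wt g = \sum_m ((m \in g) : nat) by rewrite /wt -(@card_sumb _ (fun m => m \in g)); apply: eq_card => m; rewrite !inE ?mk_pred.
have P1 : \sum_m ((m \in g) + ((m \in g) && l m && r m) + (~~ (m \in g) && l m)) <= wt ei1.
  rewrite Hw; apply: leq_sum => m _.
  case gm: (m \in g) => /=; last by rewrite add0n leq_addr.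
  have := @F1 i ei1 m gm; rewrite -/(l m) -/(r m).
  by case: (l m); case: (r m).
have P2 : \sum_m ((m \in g) && (ordS m \notin g) : nat) <=
   \sum_m (((m \in g) && l m && r m) + (~~ (m \in g) && l m)).
  rewrite big_split /= [X in _ <= _ + X](reindex_inj (@ordS_inj _)) -big_split /=.
  apply: leq_sum => m _.
  case gm: (m \in g) => //=. case gs: (ordS m \in g) => //=.
  case ls: (l (ordS m)); first by rewrite addn1.
  have := @F2 i ei1 m gm; rewrite -/(l m) -/(r m) -/(l (ordS m)) ls => /(_ isT) ->.
  by [].
rewrite /npaths; case: eqP => _.
  rewrite addn0; apply: leq_trans P1; rewrite Hg; apply: leq_sum => m _; lia.
have -> : #|[set v in g | mk i (v + 2 ^ i - 1) \notin g]| = \sum_m ((m \in g) && (ord_pred m \notin g) : nat).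
  rewrite -(@card_sumb _ (fun m => (m \in g) && (ord_pred m \notin g))); apply: eq_card => m; rewrite !inE ?mk_pred //.
rewrite shift_eq Hg; apply: leq_trans P1.
rewrite !big_split /= -addnA leq_add2l. by rewrite -big_split.
Qed.
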